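(* Let $\mu\in\mathbb{C}$ and $\ell\in\mathbb{N}_0$. For every $f\in C^\infty(\mathbb{R}_+)$ and $x>0$, $$\mathcal{D}_{\mu,2\ell+1}\big(x^{-(2\ell+1)}e^{-x}f(2x)\big)=x^{-(2\ell+1)}e^{-x}\left(\Big(4\mathcal{P}_{\mu,\ell}+\frac{(\mu-2\ell-1)(\mu+2\ell+3)}{2}\Big)f\right)(2x).$$
   Context: Let $\theta=x\frac{d}{dx}$ be the Euler operator on $\mathbb{R}_+$; products of operators denote composition and functions of $x$ act by multiplication. Define $$\mathcal{D}_{\mu,\nu}=\frac{1}{x^2}\big((\theta+\nu)(\theta+\mu+\nu)-x^2\big)\big(\theta(\theta+\mu)-x^2\big)-\frac{(\mu-\nu)(\mu+\nu+2)}{2}$$ and $$\mathcal{P}_{\mu,\ell}=\frac{1}{x^2}\Big(\big(\theta+\mu-2\ell-1-\tfrac x2\big)\big(\theta+\mu-\tfrac x2\big)-\big(\tfrac x2\big)^2\Big)\Big(\big(\theta-2\ell-1-\tfrac x2\big)\big(\theta-\tfrac x2\big)-\big(\tfrac x2\big)^2\Big).$$ *)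

(* Defs.v *)
From Stdlib Require Import Reals.
From Coquelicot Require Import Coquelicot.
Open Scope R_scope.

(* Complex-valued functions of a real variable; only their values on (0,+oo) matter. *)
Definition cfun := R -> C.
Definition Op := cfun -> cfun.

Definition Dc (f : cfun) : cfun :=
  fun x => (Derive (fun t => Re (f t)) x, Derive (fun t => Im (f t)) x).

Definition smooth_pos (f : cfun) : Prop :=
  forall (n : nat) (x : R), 0 < x ->
    ex_derive (Derive_n (fun t => Re (f t)) n) x /\
    ex_derive (Derive_n (fun t => Im (f t)) n) x.

Definition theta : Op := fun f x => (RtoC x * Dc f x)%C.
Definition op_comp (A B : Op) : Op := fun f => A (B f).
Definition op_add (A B : Op) : Op := fun f x => (A f x + B f x)%C.
Definition op_sub (A B : Op) : Op := fun f x => (A f x - B f x)%C.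
Definition op_cst (c : C) : Op := fun f x => (c * f x)%C.
Definition op_mulf (g : R -> C) : Op := fun f x => (g x * f x)%C.

Definition Dop (mu nu : C) : Op :=
  op_sub
    (op_comp (op_mulf (fun x => RtoC (/ (x ^ 2))))
       (op_comp
          (op_sub (op_comp (op_add theta (op_cst nu)) (op_add theta (op_cst (mu + nu)%C)))
                  (op_mulf (fun x => RtoC (x ^ 2))))
          (op_sub (op_comp theta (op_add theta (op_cst mu)))
                  (op_mulf (fun x => RtoC (x ^ 2))))))
    (op_cst ((mu - nu) * (mu + nu + RtoC 2) / RtoC 2)%C).

Definition Pop (mu : C) (l : nat) : Op :=
  let a := RtoC (2 * INR l + 1) in
  let half := op_mulf (fun x => RtoC (x / 2)) in
  let sq := op_mulf (fun x => RtoC ((x / 2) ^ 2)) in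
  op_comp (op_mulf (fun x => RtoC (/ (x ^ 2))))
    (op_comp
       (op_sub (op_comp (op_sub (op_add theta (op_cst (mu - a)%C)) half)
                        (op_sub (op_add theta (op_cst mu)) half))
               sq)
       (op_sub (op_comp (op_sub (op_add theta (op_cst (- a)%C)) half)
                        (op_sub theta half))
               sq)).

(* Main.v *)
Require Import Defs.
From Stdlib Require Import Reals Lra Lia.
From Coquelicot Require Import Coquelicot.
Open Scope R_scope.

Definition hasD (h d : cfun) : Prop :=
  forall t, 0 < t -> is_derive (fun s => Re (h s)) t (Re (d t)) /\
                     is_derive (fun s => Im (h s)) t (Im (d t)).

Lemma isd_eq (f : R -> R) x l l' : is_derive f x l -> l = l' -> is_derive f x l'.
Proof. intros H ->; exact H. Qed.

Lemma isd_fext (f g : R -> R) x l : (forall t, f t = g t) -> is_derive f x l -> is_derive g x l.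
Proof. intros H; apply is_derive_ext; exact H. Qed.

Lemma rmult_d (f g : R -> R) x df dg : is_derive f x df -> is_derive g x dg ->
  is_derive (fun t => f t * g t) x (df * g x + f x * dg).
Proof. intros H1 H2. apply (is_derive_mult f g x df dg H1 H2). intros; apply Rmult_comm. Qed.

Lemma hasD_add h1 d1 h2 d2 : hasD h1 d1 -> hasD h2 d2 ->
  hasD (fun t => h1 t + h2 t)%C (fun t => d1 t + d2 t)%C.
Proof.
  intros H1 H2 t Ht; destruct (H1 t Ht) as [a b]; destruct (H2 t Ht) as [c d]; simpl.
  split; [apply (is_derive_plus _ _ _ _ _ a c) | apply (is_derive_plus _ _ _ _ _ b d)].
Qed.

Lemma hasD_sub h1 d1 h2 d2 : hasD h1 d1 -> hasD h2 d2 ->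
  hasD (fun t => h1 t - h2 t)%C (fun t => d1 t - d2 t)%C.
Proof.
  intros H1 H2 t Ht; destruct (H1 t Ht) as [a b]; destruct (H2 t Ht) as [c d]; simpl.
  split; [apply (is_derive_minus _ _ _ _ _ a c) | apply (is_derive_minus _ _ _ _ _ b d)].
Qed.

Lemma hasD_mul h1 d1 h2 d2 : hasD h1 d1 -> hasD h2 d2 ->
  hasD (fun t => h1 t * h2 t)%C (fun t => d1 t * h2 t + h1 t * d2 t)%C.
Proof.
  intros H1 H2 t Ht; destruct (H1 t Ht) as [a b]; destruct (H2 t Ht) as [c d]; simpl.
  split.
  - eapply isd_eq. apply (is_derive_minus _ _ _ _ _ (rmult_d _ _ _ _ _ a c) (rmult_d _ _ _ _ _ b d)).
    simpl. unfold minus, plus, opp; unfold Re, Im; simpl; ring.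
  - eapply isd_eq. apply (is_derive_plus _ _ _ _ _ (rmult_d _ _ _ _ _ a d) (rmult_d _ _ _ _ _ b c)).
    simpl. unfold plus; simpl; unfold Re, Im; ring.
Qed.

Lemma hasD_const (c : C) : hasD (fun _ => c) (fun _ => RtoC 0).
Proof. intros t Ht; simpl; split; (eapply isd_eq; [apply is_derive_const | reflexivity]). Qed.

Lemma hasD_real (r r' : R -> R) : (forall t, 0 < t -> is_derive r t (r' t)) ->
  hasD (fun t => RtoC (r t)) (fun t => RtoC (r' t)).
Proof. intros H t Ht; simpl; split; [apply H; exact Ht | (eapply isd_eq; [apply is_derive_const | reflexivity])]. Qed.

Lemma hasD_id : hasD (fun t => RtoC t) (fun _ => RtoC 1).
Proof. apply (hasD_real (fun t => t) (fun _ => 1)). intros; eapply isd_eq; [apply is_derive_id | reflexivity]. Qed.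

Lemma hasD_sq : hasD (fun t => RtoC (t ^ 2)) (fun t => RtoC (2 * t)).
Proof. apply (hasD_real (fun t => t^2) (fun t => 2 * t)). intros t _.
  auto_derive; auto; ring. Qed.

Lemma hasD_half : hasD (fun t => RtoC (t / 2)) (fun t => RtoC (/ 2)).
Proof. apply (hasD_real (fun t => t / 2) (fun t => /2)). intros t _.
  auto_derive; auto; field. Qed.

Lemma hasD_hsq : hasD (fun t => RtoC ((t / 2) ^ 2)) (fun t => RtoC (t / 2)).
Proof. apply (hasD_real (fun t => (t/2)^2) (fun t => t/2)). intros t _.
  auto_derive; auto; field. Qed.

Lemma hasD_q (l : nat) : hasD (fun t => RtoC (/ t ^ (2 * l + 1) * exp (- t)))
  (fun t => RtoC ((- (2 * INR l + 1) * / t - 1) * (/ t ^ (2 * l + 1) * exp (- t)))).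
Proof.
  apply (hasD_real (fun t => / t ^ (2 * l + 1) * exp (- t))). intros t Ht.
  auto_derive. apply pow_nonzero; lra.
  replace (l + (l + 0) + 1)%nat with (S (2 * l)) by lia.
  replace (2 * l + 1)%nat with (S (2 * l)) by lia.
  rewrite S_INR, mult_INR. simpl Init.Nat.pred. rewrite <- tech_pow_Rmult.
  replace (l + (l + 0))%nat with (2 * l)%nat by lia. replace (INR 2) with 2 by (simpl; ring). field. split; [apply pow_nonzero|]; lra.
Qed.

Lemma loc_pos (P : R -> Prop) t : 0 < t -> (forall s, 0 < s -> P s) -> locally t P.
Proof. intros Ht H. apply (locally_interval P t 0 p_infty); simpl; auto. Qed.

Lemma hasD_ext h k d : (forall t, 0 < t -> h t = k t) -> hasD k d -> hasD h d.
Proof.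
  intros E H t Ht. destruct (H t Ht) as [a b]. split.
  - apply (is_derive_ext_loc (fun s => Re (k s))); [|exact a].
    apply loc_pos; [exact Ht|]. intros s Hs; rewrite E; auto.
  - apply (is_derive_ext_loc (fun s => Im (k s))); [|exact b].
    apply loc_pos; [exact Ht|]. intros s Hs; rewrite E; auto.
Qed.

Lemma Dc_val h d t : hasD h d -> 0 < t -> Dc h t = d t.
Proof.
  intros H Ht. destruct (H t Ht) as [a b]. unfold Dc.
  replace (Derive (fun s => Re (h s)) t) with (Re (d t)) by (symmetry; apply is_derive_unique; exact a).
  replace (Derive (fun s => Im (h s)) t) with (Im (d t)) by (symmetry; apply is_derive_unique; exact b).
  destruct (d t); reflexivity.
Qed.

Lemma theta_val h d t : hasD h d -> 0 < t -> theta h t = (RtoC t * d t)%C.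
Proof. intros H Ht. unfold theta. rewrite (Dc_val h d t H Ht). reflexivity. Qed.

Lemma hasD_theta h d d2 : hasD h d -> hasD (fun t => RtoC t * d t)%C d2 -> hasD (fun t => theta h t) d2.
Proof. intros H H2. apply (hasD_ext _ _ _ (fun t Ht => theta_val h d t H Ht) H2). Qed.

Definition FF (f : cfun) (j : nat) (t : R) : C :=
  (Derive_n (fun s => Re (f s)) j t, Derive_n (fun s => Im (f s)) j t).

Lemma hasD_FF f j : smooth_pos f -> hasD (FF f j) (FF f (S j)).
Proof.
  intros Hf t Ht. destruct (Hf j t Ht) as [a b]. unfold FF; simpl. split.
  - apply Derive_correct; exact a.
  - apply Derive_correct; exact b.
Qed.

Lemma hasD_FF2 f j : smooth_pos f ->
  hasD (fun t => FF f j (2 * t)) (fun t => RtoC 2 * FF f (S j) (2 * t))%C.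
Proof.
  intros Hf t Ht. destruct (Hf j (2 * t)) as [a b]; [lra|]. unfold FF; simpl. split.
  - eapply isd_eq. apply (is_derive_comp (Derive_n (fun s => Re (f s)) j) (fun s => 2 * s) t (Derive (Derive_n (fun s => Re (f s)) j) (2 * t)) 2).
    apply Derive_correct; exact a. auto_derive; auto; ring.
    unfold scal; simpl; unfold mult; simpl. ring.
  - eapply isd_eq. apply (is_derive_comp (Derive_n (fun s => Im (f s)) j) (fun s => 2 * s) t (Derive (Derive_n (fun s => Im (f s)) j) (2 * t)) 2).
    apply Derive_correct; exact b. auto_derive; auto; ring.
    unfold scal; simpl; unfold mult; simpl. ring.
Qed.

Lemma FF0 f t : f t = FF f 0 t.
Proof. unfold FF; simpl. destruct (f t); reflexivity. Qed.

Lemma hasD_f f : smooth_pos f -> hasD f (FF f 1).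
Proof. intros Hf. apply (hasD_ext _ (FF f 0)). intros; apply FF0. apply hasD_FF; exact Hf. Qed.

Lemma hasD_f2 f : smooth_pos f -> hasD (fun t => f (2 * t)) (fun t => RtoC 2 * FF f 1 (2 * t))%C.
Proof. intros Hf. apply (hasD_ext _ (fun t => FF f 0 (2 * t))). intros; apply FF0. apply hasD_FF2; exact Hf. Qed.

Lemma hasD_dext h d d' : hasD h d -> (forall t, 0 < t -> d t = d' t) -> hasD h d'.
Proof. intros H E t Ht. rewrite <- E by exact Ht. apply H; exact Ht. Qed.

Lemma hasD_qC (l : nat) : hasD (fun t => RtoC (/ t ^ (2 * l + 1) * exp (- t)))
  (fun t => (RtoC (- (2 * INR l + 1)) * RtoC (/ t) - RtoC 1) * RtoC (/ t ^ (2 * l + 1) * exp (- t)))%C.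
Proof.
  eapply hasD_dext. apply hasD_q. intros t Ht.
  apply injective_projections; simpl; field; repeat split; try lra; apply pow_nonzero; lra.
Qed.

Lemma hasD_inv : hasD (fun t => RtoC (/ t)) (fun t => RtoC (-1) * (RtoC (/ t) * RtoC (/ t)))%C.
Proof.
  eapply hasD_dext. apply (hasD_real (fun t => / t) (fun t => - (/ t * / t))).
  intros t Ht. auto_derive. lra. field. lra.
  intros t Ht. apply injective_projections; simpl; ring.
Qed.

Lemma hasD_2t : hasD (fun t => RtoC (2 * t)) (fun _ => RtoC 2).
Proof. apply (hasD_real (fun t => 2 * t) (fun _ => 2)). intros t _. auto_derive; auto; ring. Qed.


Ltac solveD f Hf := cbv beta;
  lazymatch goal with
  | |- hasD (fun _ => ?c) _ => apply hasD_const
  | |- hasD (fun t => theta ?h t) _ => eapply hasD_theta; [solveD f Hf | solveD f Hf]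
  | |- hasD (theta ?h) _ => eapply hasD_theta; [solveD f Hf | solveD f Hf]
  | |- hasD (fun t => (@?A t + @?B t)%C) _ => eapply hasD_add; [solveD f Hf | solveD f Hf]
  | |- hasD (fun t => (@?A t - @?B t)%C) _ => eapply hasD_sub; [solveD f Hf | solveD f Hf]
  | |- hasD (fun t => (@?A t * @?B t)%C) _ => eapply hasD_mul; [solveD f Hf | solveD f Hf]
  | |- hasD (fun t => RtoC t) _ => apply hasD_id
  | |- hasD RtoC _ => apply hasD_id
  | |- hasD (fun t => RtoC (t ^ 2)) _ => apply hasD_sq
  | |- hasD (fun t => RtoC (t / 2)) _ => apply hasD_half
  | |- hasD (fun t => RtoC (2 * t)) _ => apply hasD_2t
  | |- hasD (fun t => RtoC ((t / 2) ^ 2)) _ => apply hasD_hsq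
  | |- hasD (fun t => RtoC (/ t ^ (2 * ?l + 1) * exp (- t))) _ => apply hasD_qC
  | |- hasD (fun t => RtoC (/ t)) _ => apply hasD_inv
  | |- hasD (FF f ?j) _ => apply hasD_FF; exact Hf
  | |- hasD (fun t => FF f ?j (2 * t)) _ => apply hasD_FF2; exact Hf
  | |- hasD (fun t => f (2 * t)) _ => apply hasD_f2; exact Hf
  | |- hasD (fun t => f t) _ => apply hasD_f; exact Hf
  | |- hasD f _ => apply hasD_f; exact Hf
  | |- ?g => idtac g; fail
  end.

Theorem lemma3p3 (mu : C) (l : nat) (f : R -> C) (x : R) :
  smooth_pos f -> 0 < x ->
  Dop mu (RtoC (2 * INR l + 1))
      (fun t => (RtoC (/ (t ^ (2 * l + 1)) * exp (- t)) * f (2 * t)%R)%C) x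
  = (RtoC (/ (x ^ (2 * l + 1)) * exp (- x)) *
     op_add (op_comp (op_cst (RtoC 4)) (Pop mu l))
            (op_cst ((mu - RtoC (2 * INR l + 1)) * (mu + RtoC (2 * INR l + 3)) / RtoC 2)%C)
            f (2 * x)%R)%C.
Proof.
  intros Hf Hx.
  assert (H2x : 0 < 2 * x) by lra.
  unfold Dop, Pop, op_sub, op_comp, op_add, op_cst, op_mulf. cbv beta.
  repeat (erewrite (theta_val _ _ x); [| solveD f Hf | exact Hx]).
  repeat (erewrite (theta_val _ _ (2 * x)); [| solveD f Hf | exact H2x]).
  cbv beta.
  rewrite (FF0 f (2 * x)).
  set (Q := / x ^ (2 * l + 1) * exp (- x)).
  clearbody Q.
  assert (Hx0 : x <> 0) by lra.
  unfold Rdiv.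
  repeat first [ rewrite RtoC_plus | rewrite RtoC_mult | rewrite RtoC_minus | rewrite RtoC_opp
               | rewrite RtoC_pow | rewrite RtoC_inv by (try apply pow_nonzero; lra) ].

  field. intros H; apply (f_equal fst) in H; simpl in H; lra.
Qed.
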